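(* Let $S\subseteq M_n$ and $T\subseteq M_{n'}$ be noncommutative graphs. Then $\mathcal{H}(S\otimes T)\leq \mathcal{H}(S)\,\mathcal{H}(T)$.
   Context: All scalars are complex; $M_n$ denotes complex $n\times n$ matrices. A noncommutative graph is a linear subspace $S\subseteq M_n$ that contains $I_n$ and is closed under conjugate transpose. For subspaces $S\subseteq M_n$, $T\subseteq M_{n'}$, $S\otimes T=\mathrm{span}\{A\otimes B: A\in S, B\in T\}\subseteq M_{nn'}$ (Kronecker product). For a subspace $S\subseteq M_n$, $M_m(S)$ denotes the set of $m\times m$ block matrices $B=[B_{i,j}]_{i,j\in[m]}$ with every block $B_{i,j}\in S$, viewed as elements of $M_{mn}$. The Haemers bound of a noncommutative graph $S\subseteq M_n$ is $\mathcal{H}(S)=\min\{\mathrm{rk}(B):\ m\in\mathbb{N},\ B\in M_m(S),\ \sum_{i=1}^m B_{i,i}=I_n\}$. *)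

(* Defs.v *)
(* Complex numbers are modelled as [complex R] (= R[i]) for
   an arbitrary real field [R : realType] (so in particular R = the reals, C = ℂ). *)
From HB Require Import structures.
From mathcomp Require Import all_boot all_order all_algebra.
From mathcomp Require Import complex mxtens.
From mathcomp Require Import reals.
Set Implicit Arguments. Unset Strict Implicit. Unset Printing Implicit Defensive.
Import Order.TTheory GRing.Theory Num.Theory.
Local Open Scope ring_scope.

Section NCGraph.
Variable R : realType.
Local Notation C := (complex R).

Definition adjmx (n : nat) (A : 'M[C]_n) : 'M[C]_n := map_mx Num.conj A^T.

Definition nc_graph (n : nat) (S : {vspace 'M[C]_n}) : Prop :=
  (1%:M : 'M[C]_n) \in S /\ forall A : 'M[C]_n, A \in S -> adjmx A \in S.

(* S ⊗ T = span { A ⊗ B : A ∈ S, B ∈ T } (Kronecker product [*t] of mxtens),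
   as a predicate on 'M_(n * n'): finite linear combinations of products
   (scalars can be absorbed, but we keep them to literally mirror "span"). *)
Definition tens_space (n n' : nat) (S : {vspace 'M[C]_n}) (T : {vspace 'M[C]_n'})
  (M : 'M[C]_(n * n')) : Prop :=
  exists (k : nat) (c : 'I_k -> C) (A : 'I_k -> 'M[C]_n) (B : 'I_k -> 'M[C]_n'),
    (forall i, A i \in S) /\ (forall i, B i \in T) /\
    M = \sum_(i < k) c i *: (A i *t B i).

(* block (i,j) (of size n x n) of an (m*n) x (m*n) matrix; the row index
   mxtens_index (i, k) has value i * n + k *)
Definition blockmx (m n : nat) (B : 'M[C]_(m * n)) (i j : 'I_m) : 'M[C]_n :=
  \matrix_(k, l) B (mxtens_index (i, k)) (mxtens_index (j, l)).

Definition haemers_feasible (n : nat) (P : 'M[C]_n -> Prop) (r : nat) : Prop :=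
  exists (m : nat) (B : 'M[C]_(m * n)),
    (forall i j, P (blockmx B i j)) /\
    \sum_(i < m) blockmx B i i = 1%:M /\
    \rank B = r.

Definition is_haemers (n : nat) (P : 'M[C]_n -> Prop) (h : nat) : Prop :=
  haemers_feasible P h /\ forall r, haemers_feasible P r -> (h <= r)%N.

End NCGraph.

(* Main.v *)
Require Import Defs.
From HB Require Import structures.
From mathcomp Require Import all_boot all_order all_algebra.
From mathcomp Require Import complex mxtens.
From mathcomp Require Import reals.
Local Open Scope ring_scope.
Import GRing.Theory.

Section Aux.
Context {F : fieldType}.

Lemma tensmxDl m n p q (A A' : 'M[F]_(m,n)) (B : 'M[F]_(p,q)) :
  (A + A') *t B = A *t B + A' *t B.
Proof. by apply/matrixP=> i j; rewrite !mxE mulrDl. Qed.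

Lemma tensmxDr m n p q (A : 'M[F]_(m,n)) (B B' : 'M[F]_(p,q)) :
  A *t (B + B') = A *t B + A *t B'.
Proof. by apply/matrixP=> i j; rewrite !mxE mulrDr. Qed.

Lemma tensmx_suml m n p q k (A : 'I_k -> 'M[F]_(m,n)) (B : 'M[F]_(p,q)) :
  (\sum_(i < k) A i) *t B = \sum_(i < k) (A i *t B).
Proof.
elim/big_rec2: _ => [|i x y _ <-]; first by rewrite tens0mx.
by rewrite tensmxDl.
Qed.

Lemma tensmx_sumr m n p q k (A : 'M[F]_(m,n)) (B : 'I_k -> 'M[F]_(p,q)) :
  A *t (\sum_(i < k) B i) = \sum_(i < k) (A *t B i).
Proof.
elim/big_rec2: _ => [|i x y _ <-]; first by rewrite tensmx0.
by rewrite tensmxDr.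
Qed.

Lemma tens11 m n : (1%:M : 'M[F]_m) *t (1%:M : 'M[F]_n) = 1%:M.
Proof.
apply/matrixP=> i j.
case: (mxtens_indexP i)=> i0 i1; case: (mxtens_indexP j)=> j0 j1.
rewrite tensmxE !mxE -natrM; congr (_%:R).
rewrite (inj_eq (can_inj (@mxtens_indexK _ _))) xpair_eqE.
by case: (i0 == j0); case: (i1 == j1).
Qed.

Lemma rank_tens m n p q (A : 'M[F]_(m,n)) (B : 'M[F]_(p,q)) :
  (\rank (A *t B) <= \rank A * \rank B)%N.
Proof.
rewrite -{1}(mulmx_base A) -{1}(mulmx_base B) -tensmx_mul.
apply: leq_trans (mxrankM_maxl _ _) _.
exact: rank_leq_col.
Qed.

Lemma rank_mxsub m n p q (f : 'I_p -> 'I_m) (g : 'I_q -> 'I_n) (A : 'M[F]_(m,n)) :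
  (\rank (mxsub f g A) <= \rank A)%N.
Proof.
have -> : mxsub f g A = (mxsub g f A^T)^T by apply/matrixP=> i j; rewrite !mxE.
rewrite mxrank_tr.
apply: (@leq_trans (\rank (rowsub f A))).
  have -> : mxsub g f A^T = rowsub g (rowsub f A)^T by apply/matrixP=> i j; rewrite !mxE.
  by rewrite -[X in (_ <= X)%N]mxrank_tr; apply: mxrankS; apply: rowsub_sub.
by apply: mxrankS; apply: rowsub_sub.
Qed.

End Aux.

Theorem mainTheorem2 (R : realType) (n n' : nat)
  (S : {vspace 'M[complex R]_n}) (T : {vspace 'M[complex R]_n'})
  (hS : nc_graph S) (hT : nc_graph T) (hHS hHT hHST : nat) :
  is_haemers (fun A => A \in S) hHS ->
  is_haemers (fun A => A \in T) hHT ->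
  is_haemers (tens_space S T) hHST ->
  (hHST <= hHS * hHT)%N.
Proof.
move=> [[m1 [B1 [H1b [H1s H1r]]]] _] [[m2 [B2 [H2b [H2s H2r]]]] _] [_ Hmin].
pose ui := @mxtens_unindex.
pose f (r : 'I_((m1 * m2) * (n * n'))) : 'I_((m1 * n) * (m2 * n')) :=
  mxtens_index (mxtens_index ((ui _ _ (ui _ _ r).1).1, (ui _ _ (ui _ _ r).2).1),
                mxtens_index ((ui _ _ (ui _ _ r).1).2, (ui _ _ (ui _ _ r).2).2)).
pose B := mxsub f f (B1 *t B2).
have Hblk : forall a b, blockmx B a b =
    blockmx B1 (ui _ _ a).1 (ui _ _ b).1 *t blockmx B2 (ui _ _ a).2 (ui _ _ b).2.
  move=> a b; apply/matrixP=> k l.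
  case: (mxtens_indexP k)=> k0 k1; case: (mxtens_indexP l)=> l0 l1.
  by rewrite tensmxE !mxE /f /ui !mxtens_indexK /=.
apply: (@leq_trans (\rank B)); last first.
  rewrite -H1r -H2r /B; exact: (leq_trans (rank_mxsub _ _ _ _ f f (B1 *t B2)) (rank_tens _ _ _ _ B1 B2)).
apply: Hmin; exists (m1 * m2)%N, B; split; [|split].
- move=> a b; rewrite Hblk.
  exists 1%N, (fun=> 1), (fun=> blockmx B1 (ui _ _ a).1 (ui _ _ b).1),
    (fun=> blockmx B2 (ui _ _ a).2 (ui _ _ b).2).
  split; first by move=> _; apply: H1b.
  split; first by move=> _; apply: H2b.
  by rewrite big_ord1 scale1r.
- rewrite (reindex (@mxtens_index m1 m2)) /=; last first.
    by exists (@mxtens_unindex m1 m2) => x _; rewrite ?mxtens_indexK ?mxtens_unindexK.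
  transitivity (\sum_(i < m1) \sum_(j < m2)
     blockmx B (mxtens_index (i, j)) (mxtens_index (i, j))).
    by rewrite pair_bigA; apply: eq_bigr => -[i j].
  under eq_bigr do under eq_bigr do rewrite Hblk /ui mxtens_indexK /=.
  under eq_bigr do rewrite -tensmx_sumr.
  by rewrite -tensmx_suml H1s H2s tens11.
- by [].
Qed.
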